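(* Let $E,J,R,Q\in\mathbb{R}^{n\times n}$ with $J=-J^T$, $R=R^T\ge0$ and $Q^TE=E^TQ\ge0$. Then the pencil $sE-(J-R)Q$ is regular if and only if $\ker E\cap\ker(Q^TJQ)\cap\ker(Q^TRQ)=\{0\}$. Furthermore, if this holds and additionally $\ker Q\subseteq\ker E$, then $[E,(J-R)Q]$ is stable.
   Context: A pencil $sE-A$ is regular if $\det(sE-A)$ is not the zero polynomial. For $E,A\in\mathbb{R}^{n\times n}$, $[E,A]$ is stable if every $x\in C^\infty(\mathbb{R},\mathbb{R}^n)$ with $\tfrac{d}{dt}Ex=Ax$ is bounded on $[0,\infty)$. *)

(* Defs.v *)
From mathcomp Require Import all_boot all_order all_algebra.
From mathcomp Require Import all_classical all_reals all_analysis.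
Set Implicit Arguments. Unset Strict Implicit. Unset Printing Implicit Defensive.
Import Order.TTheory GRing.Theory Num.Theory.
Local Open Scope ring_scope.

(* positive semidefinite quadratic form: v^T M v >= 0 (symmetry is a separate hypothesis) *)
Definition psd (R : realType) (n : nat) (M : 'M[R]_n) : Prop :=
  forall v : 'cV[R]_n, 0 <= (v^T *m M *m v) 0 0.

Definition pencil (R : realType) (n : nat) (E A : 'M[R]_n) : 'M[{poly R}]_n :=
  \matrix_(i, j) ('X * (E i j)%:P - (A i j)%:P).

Definition regular_pencil (R : realType) (n : nat) (E A : 'M[R]_n) : Prop :=
  \det (pencil E A) != 0.

Definition smooth_vec (R : realType) (n : nat) (x : R -> 'cV[R]_n) : Prop :=
  forall (i : 'I_n) (k : nat) (t : R),
    derivable (derive1n k (fun s => x s i 0)) t 1.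

Definition solves_dae (R : realType) (n : nat) (E A : 'M[R]_n) (x : R -> 'cV[R]_n) : Prop :=
  forall (i : 'I_n) (t : R),
    derivable (fun s => (E *m x s) i 0) t 1 /\
    derive1 (fun s => (E *m x s) i 0) t = (A *m x t) i 0.

Definition stable_pencil (R : realType) (n : nat) (E A : 'M[R]_n) : Prop :=
  forall x : R -> 'cV[R]_n, smooth_vec x -> solves_dae E A x ->
    exists M : R, forall t : R, 0 <= t -> forall i : 'I_n, `|x t i 0| <= M.

(* Main.v *)
From mathcomp Require Import all_boot all_order all_algebra.
From mathcomp Require Import all_classical all_reals all_analysis.
From mathcomp Require Import lra ring.
Require Import Defs.
Set Implicit Arguments. Unset Strict Implicit. Unset Printing Implicit Defensive.
Import Order.TTheory GRing.Theory Num.Theory.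
Local Open Scope ring_scope.

Lemma quad_disc (R : realType) (a b c : R) : 0 <= c ->
  (forall t : R, 0 <= a + 2 * t * b + t ^+ 2 * c) -> b ^+ 2 <= a * c.
Proof.
move=> c0 H.
have [cp|] := ltP 0 c.
  have h1 := H (- (b / c)).
  have hu : c * (b / c) = b by rewrite mulrC divfK // gt_eqF.
  move: h1 hu; set u := b / c => h1 hu.
  nra.
move=> cle; have -> : c = 0 by apply/eqP; rewrite eq_le cle c0.
have [->|bn] := eqVneq b 0; first by rewrite expr0n /= mulr0.
have h1 := H (- ((a + 1) / (2 * b))).
have hu : (2 * b) * ((a + 1) / (2 * b)) = a + 1.
  by rewrite mulrC divfK // mulf_neq0 // pnatr_eq0.
move: h1 hu; set u := (a + 1) / (2 * b) => h1 hu.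
nra.
Qed.

Lemma qf_sym (R : realType) n (P : 'M[R]_n) (v w : 'cV[R]_n) : P^T = P ->
  (v^T *m P *m w) 0 0 = (w^T *m P *m v) 0 0.
Proof.
move=> hP; have -> : v^T *m P *m w = (w^T *m P *m v)^T.
  by rewrite !trmx_mul trmxK hP mulmxA.
by rewrite mxE.
Qed.

Lemma cs_psd (R : realType) n (P : 'M[R]_n) (v w : 'cV[R]_n) : P^T = P -> psd P ->
  ((w^T *m P *m v) 0 0) ^+ 2 <= (w^T *m P *m w) 0 0 * (v^T *m P *m v) 0 0.
Proof.
move=> hs hp; rewrite mulrC; apply: quad_disc; first exact: hp.
move=> t; have := hp (v + t *: w).
have trD : (v + t *: w)^T = v^T + t *: w^T by apply/matrixP=> i j; rewrite !mxE.
rewrite trD !mulmxDl !mulmxDr -!scalemxAl -!scalemxAr.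
have -> : v^T *m P *m w = (w^T *m P *m v)^T.
  by rewrite !trmx_mul trmxK hs mulmxA.
set a := v^T *m P *m v; set b := w^T *m P *m v; set c := w^T *m P *m w.
rewrite !mxE.
move=> h; apply: (le_trans h); rewrite le_eqVlt; apply/orP; left; apply/eqP; ring.
Qed.

Lemma qf_delta (R : realType) n (P : 'M[R]_n) (v : 'cV[R]_n) j :
  ((delta_mx j 0 : 'cV[R]_n)^T *m P *m v) 0 0 = (P *m v) j 0.
Proof.
rewrite trmx_delta -mulmxA -rowE.
by rewrite !mxE.
Qed.

Lemma psd_diag (R : realType) n (P : 'M[R]_n) j : psd P -> 0 <= P j j.
Proof.
move=> hp; have := hp (delta_mx j 0); rewrite qf_delta.
by rewrite -colE mxE.
Qed.

Lemma psd_entry (R : realType) n (P : 'M[R]_n) (v : 'cV[R]_n) j : P^T = P -> psd P ->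
  ((P *m v) j 0) ^+ 2 <= P j j * (v^T *m P *m v) 0 0.
Proof.
move=> hs hp; have := cs_psd v (delta_mx j 0) hs hp.
by rewrite !qf_delta -colE [col j P j 0]mxE.
Qed.

Lemma psd_zero (R : realType) n (P : 'M[R]_n) (v : 'cV[R]_n) : P^T = P -> psd P ->
  (v^T *m P *m v) 0 0 = 0 -> P *m v = 0.
Proof.
move=> hs hp h0; apply/matrixP=> j k; rewrite (ord1 k) [RHS]mxE.
have := psd_entry v j hs hp; rewrite h0 mulr0.
by move=> h; apply/eqP; rewrite -sqrf_eq0 eq_le h sqr_ge0.
Qed.

Lemma det_eval (R : realType) n (M : 'M[{poly R}]_n) (x : R) :
  (\det M).[x] = \det (map_mx (fun p => p.[x]) M).
Proof.
have := det_map_mx (horner_eval x : {rmorphism {poly R} -> R}) M.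
by move=> h; rewrite -horner_evalE -h.
Qed.

Lemma pencil_eval (R : realType) n (E A : 'M[R]_n) (x : R) :
  (\det (pencil E A)).[x] = \det (x *: E - A).
Proof.
rewrite det_eval; congr (\det _); apply/matrixP=> i j; rewrite !mxE.
by rewrite hornerD hornerN mulrC hornerMX !hornerC mulrC.
Qed.

Lemma char_eval (R : realType) n (M : 'M[R]_n) (x : R) :
  (char_poly M).[x] = \det (x%:M - M).
Proof.
rewrite /char_poly det_eval; congr (\det _); apply/matrixP=> i j; rewrite !mxE.
by case: (i == j); rewrite /= ?mulr1n ?mulr0n hornerD hornerN ?hornerX ?hornerC.
Qed.

Lemma poly_pos_roots (R : realType) (p : {poly R}) :
  (forall x : R, 0 < x -> p.[x] = 0) -> p = 0.
Proof.
move=> H; apply/eqP; apply/negPn/negP => pn.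
set rs := [seq (i.+1)%:R | i <- iota 0 (size p)] : seq R.
have h1 : all (root p) rs.
  apply/allP => x /mapP [i _ ->]; apply/rootP; apply: H; exact: ltr0Sn.
have h2 : uniq rs.
  rewrite map_inj_uniq ?iota_uniq // => i j /eqP; rewrite eqr_nat; by move/eqP => [].
by have := max_poly_roots pn h1 h2; rewrite size_map size_iota ltnn.
Qed.

Lemma det0_col (R : realType) n (M : 'M[R]_n) :
  \det M = 0 -> exists2 v : 'cV[R]_n, v != 0 & M *m v = 0.
Proof.
move=> h; have : \det M^T == 0 by rewrite det_tr h.
move/det0P => [v vn hv]; exists v^T; first by rewrite trmx_eq0.
by rewrite -(trmxK M) -trmx_mul hv trmx0.
Qed.

Lemma col_det0 (R : realType) n (M : 'M[R]_n) (v : 'cV[R]_n) :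
  v != 0 -> M *m v = 0 -> \det M = 0.
Proof.
move=> vn hv; apply/eqP; rewrite -det_tr; apply/det0P; exists v^T; first by rewrite trmx_eq0.
by rewrite -trmx_mul hv trmx0.
Qed.

Lemma row_det0 (R : realType) n (M : 'M[R]_n) (v : 'rV[R]_n) :
  v != 0 -> v *m M = 0 -> \det M = 0.
Proof. by move=> vn hv; apply/eqP/det0P; exists v. Qed.

Lemma e00Z (R : realType) (M : 'M[R]_1) (a : R) : (a *: M) 0 0 = a * M 0 0.
Proof. by rewrite mxE. Qed.
Lemma e00D (R : realType) (M N : 'M[R]_1) : (M + N) 0 0 = M 0 0 + N 0 0.
Proof. by rewrite mxE. Qed.
Lemma e00B (R : realType) (M N : 'M[R]_1) : (M - N) 0 0 = M 0 0 - N 0 0.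
Proof. by rewrite !mxE. Qed.

Lemma skew_qf (R : realType) n (J : 'M[R]_n) (u : 'cV[R]_n) : J^T = - J ->
  (u^T *m J *m u) 0 0 = 0.
Proof.
move=> hJ.
have t1 : (u^T *m J *m u)^T = u^T *m J *m u.
  by apply/matrixP=> i j; rewrite (ord1 i) (ord1 j) mxE.
have t2 : (u^T *m J *m u)^T = u^T *m J^T *m u by rewrite !trmx_mul trmxK mulmxA.
have h : u^T *m J *m u = - (u^T *m J *m u).
  by rewrite -{1}t1 t2 hJ mulmxN mulNmx.
have e : (u^T *m J *m u) 0 0 = - (u^T *m J *m u) 0 0 by rewrite {1}h mxE.
lra.
Qed.

Lemma eig_facts (R : realType) n (E J Rm Q : 'M[R]_n) (x : 'cV[R]_n) (l : R)
  (hJ : J^T = - J) (hR : Rm^T = Rm) (hRpsd : psd Rm)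
  (hQE : Q^T *m E = E^T *m Q) (hQEpsd : psd (Q^T *m E)) :
  0 < l -> (l *: E - (J - Rm) *m Q) *m x = 0 ->
  [/\ Q^T *m E *m x = 0, Rm *m (Q *m x) = 0, Q^T *m J *m Q *m x = 0,
      Q^T *m Rm *m Q *m x = 0 & l *: (E *m x) = J *m (Q *m x)].
Proof.
move=> lp h.
have hE : l *: (E *m x) = (J - Rm) *m (Q *m x).
  by apply/eqP; rewrite -subr_eq0 scalemxAl mulmxA -mulmxBl h.
have hsQE : (Q^T *m E)^T = Q^T *m E by rewrite trmx_mul trmxK hQE.
set u := Q *m x.
have key : l * (x^T *m (Q^T *m E) *m x) 0 0 + (u^T *m Rm *m u) 0 0 = 0.
  have -> : x^T *m (Q^T *m E) *m x = u^T *m (E *m x) by rewrite trmx_mul !mulmxA.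
  rewrite -e00Z scalemxAr hE mulmxBl mulmxBr e00B.
  have := skew_qf (Q *m x) hJ; rewrite /u !mulmxA => ->.
  by rewrite sub0r addNr.
have ha := hQEpsd x; have hb := hRpsd u.
have a0 : (x^T *m (Q^T *m E) *m x) 0 0 = 0 by nra.
have b0 : (u^T *m Rm *m u) 0 0 = 0 by nra.
have h1 := psd_zero hsQE hQEpsd a0.
have h2 := psd_zero hR hRpsd b0.
have h5 : l *: (E *m x) = J *m u by rewrite hE mulmxBl h2 subr0.
split => //.
- by rewrite -!mulmxA -/u -h5 -scalemxAr mulmxA h1 scaler0.
- by rewrite -!mulmxA -/u h2 mulmx0.
Qed.

Lemma gram_sum (R : realType) m (u : 'cV[R]_m) : (u^T *m u) 0 0 = \sum_i u i 0 ^+ 2.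
Proof. by rewrite mxE; apply: eq_bigr => i _; rewrite mxE expr2. Qed.

Lemma gram_ge0 (R : realType) m (u : 'cV[R]_m) : 0 <= (u^T *m u) 0 0.
Proof. by rewrite gram_sum sumr_ge0 // => i _; rewrite sqr_ge0. Qed.

Lemma gram_eq0 (R : realType) m (u : 'cV[R]_m) : (u^T *m u) 0 0 = 0 -> u = 0.
Proof.
rewrite gram_sum => h; apply/matrixP => i j; rewrite (ord1 j) mxE.
apply/eqP; rewrite -sqrf_eq0; apply/eqP.
by apply: (psumr_eq0P _ h) => // k _; rewrite sqr_ge0.
Qed.

Lemma trZ (R : realType) n (E : 'M[R]_n) (a : R) : (a *: E)^T = a *: E^T.
Proof. by apply/matrixP=> i j; rewrite !mxE. Qed.

Lemma part1_fwd (R : realType) (n : nat) (E J Rm Q : 'M[R]_n)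
  (hJ : J^T = - J) (hR : Rm^T = Rm)
  (hQE : Q^T *m E = E^T *m Q) (v : 'cV[R]_n) :
  v != 0 -> E *m v = 0 -> (Q^T *m J *m Q) *m v = 0 ->
  (Q^T *m Rm *m Q) *m v = 0 -> \det (pencil E ((J - Rm) *m Q)) = 0.
Proof.
move=> vn hE hJ0 hR0; apply: poly_pos_roots => x _; rewrite pencil_eval.
have [Qv0|Qvn] := eqVneq (Q *m v) 0.
  apply: (col_det0 vn); rewrite mulmxBl -scalemxAl hE scaler0 -mulmxA Qv0.
  by rewrite mulmx0 subr0.
rewrite -det_tr; apply: (col_det0 Qvn).
rewrite raddfB /= trZ trmx_mul raddfB /= hJ hR mulmxBl -scalemxAl mulmxA -hQE.
rewrite -mulmxA hE mulmx0 scaler0 sub0r mulmxBr mulmxA -!mulmxA.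
rewrite mulmxN mulmxBl mulNmx !mulmxA hJ0 hR0. by apply/matrixP=> i j; rewrite !mxE; lra.
Qed.

Lemma part1_bwd (R : realType) (n : nat) (E J Rm Q : 'M[R]_n)
  (hJ : J^T = - J) (hR : Rm^T = Rm) (hRpsd : psd Rm)
  (hQE : Q^T *m E = E^T *m Q) (hQEpsd : psd (Q^T *m E)) :
  (forall v : 'cV[R]_n, E *m v = 0 -> (Q^T *m J *m Q) *m v = 0 ->
        (Q^T *m Rm *m Q) *m v = 0 -> v = 0) ->
  regular_pencil E ((J - Rm) *m Q).
Proof.
move=> C; apply/eqP => hdet.
set Z := Q^T *m J *m Q; set Y := Q^T *m Rm *m Q.
set S := E^T *m E + Z^T *m Z + Y^T *m Y.
have Su : S \in unitmx.
  rewrite unitmxE unitfE; apply/eqP => /det0_col [w wn hw].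
  have eS : w^T *m S *m w = (E *m w)^T *m (E *m w) + (Z *m w)^T *m (Z *m w)
      + (Y *m w)^T *m (Y *m w).
    by rewrite /S !mulmxDr !mulmxDl !trmx_mul !mulmxA.
  have : (w^T *m S *m w) 0 0 = 0 by rewrite -mulmxA hw mulmx0 mxE.
  rewrite eS !e00D => h0.
  have g1 := gram_ge0 (E *m w); have g2 := gram_ge0 (Z *m w);
  have g3 := gram_ge0 (Y *m w).
  have e1 : E *m w = 0 by apply: gram_eq0; lra.
  have e2 : Z *m w = 0 by apply: gram_eq0; lra.
  have e3 : Y *m w = 0 by apply: gram_eq0; lra.
  by move/eqP: wn; apply; apply: C.
set M := invmx S *m (E^T *m (J *m Q)).
have : char_poly M = 0.
  apply: poly_pos_roots => l lp; rewrite char_eval.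
  have : (\det (pencil E ((J - Rm) *m Q))).[l] = 0 by rewrite hdet horner0.
  rewrite pencil_eval => /det0_col [x xn hx].
  have [h1 h2 h3 h4 h5] := eig_facts hJ hR hRpsd hQE hQEpsd lp hx.
  apply: (col_det0 xn).
  have eS : S *m x = E^T *m (E *m x).
    rewrite /S !mulmxDl -!mulmxA h2; move: h3; rewrite -!mulmxA => ->.
    by rewrite !mulmx0 !addr0.
  have eM : M *m x = l *: x.
    rewrite /M -!mulmxA -h5 -scalemxAr -eS -scalemxAr mulKmx //.
  by rewrite mulmxBl mul_scalar_mx eM subrr.
by apply/eqP; rewrite monic_neq0 // char_poly_monic.
Qed.

Lemma is_derive_sumprod (R : realType) n (a b : 'I_n -> R -> R) (da db : 'I_n -> R) (t : R) :
  (forall i, is_derive t 1 (a i) (da i)) -> (forall i, is_derive t 1 (b i) (db i)) ->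
  is_derive t 1 (fun s => \sum_i a i s * b i s) (\sum_i (a i t * db i + b i t * da i)).
Proof.
move=> ha hb.
have -> : (fun s => \sum_i a i s * b i s) = \sum_i (a i * b i).
  by apply/funext => s; rewrite fct_sumE.
by apply: is_derive_sum => i.
Qed.

Definition dcol (R : realType) n (y : R -> 'cV[R]_n) (t : R) : 'cV[R]_n :=
  \col_j derive1 (fun s => y s j 0) t.

Lemma is_derive_comp (R : realType) n (y : R -> 'cV[R]_n) (t : R) j :
  derivable (fun s => y s j 0) t 1 -> is_derive t 1 (fun s => y s j 0) (dcol y t j 0).
Proof. by move=> h; rewrite /dcol mxE derive1E; apply: derivableP. Qed.

Lemma is_derive_lin (R : realType) n (K : 'M[R]_n) (y : R -> 'cV[R]_n) (t : R) i :
  (forall j, derivable (fun s => y s j 0) t 1) ->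
  is_derive t 1 (fun s => (K *m y s) i 0) ((K *m dcol y t) i 0).
Proof.
move=> hd.
have -> : (fun s => (K *m y s) i 0) = (fun s => \sum_j (cst (K i j)) s * y s j 0).
  by apply/funext => s; rewrite mxE.
apply: is_derive_eq.
  apply: (@is_derive_sumprod R n (fun j => cst (K i j)) (fun j s => y s j 0)
     (fun j => 0) (fun j => dcol y t j 0)) => j.
  exact: is_derive_comp.
by rewrite mxE; apply: eq_bigr => j _; rewrite mulr0 addr0.
Qed.

Lemma sum_as_qf (R : realType) n (P : 'M[R]_n) (v w : 'cV[R]_n) :
  \sum_j v j 0 * (P *m w) j 0 = (v^T *m P *m w) 0 0.
Proof. by rewrite -mulmxA [in RHS]mxE; apply: eq_bigr => j _; rewrite [v^T 0 j]mxE. Qed.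

Lemma energy_deriv (R : realType) (n : nat) (E J Rm Q : 'M[R]_n)
  (hJ : J^T = - J) (hR : Rm^T = Rm) (hRpsd : psd Rm)
  (hQE : Q^T *m E = E^T *m Q) (y : R -> 'cV[R]_n) (t : R) :
  (forall j, derivable (fun s => y s j 0) t 1) ->
  E *m dcol y t = (J - Rm) *m Q *m y t ->
  exists2 D, is_derive t 1 (fun s => ((y s)^T *m (Q^T *m E) *m y s) 0 0) D & D <= 0.
Proof.
move=> hd hE; set P := Q^T *m E.
have hsP : P^T = P by rewrite /P trmx_mul trmxK hQE.
have -> : (fun s => ((y s)^T *m P *m y s) 0 0) =
    (fun s => \sum_j (fun j s => y s j 0) j s * (fun j s => (P *m y s) j 0) j s).
  by apply/funext => s /=; rewrite sum_as_qf.
eexists.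
  apply: is_derive_sumprod => j; first exact: is_derive_comp.
  exact: is_derive_lin.
rewrite big_split /= !sum_as_qf.
have -> : \sum_i (P *m y t) i 0 * dcol y t i 0 = \sum_i dcol y t i 0 * (P *m y t) i 0.
  by apply: eq_bigr => i _; rewrite mulrC.
rewrite sum_as_qf (qf_sym (dcol y t) (y t) hsP).
have -> : (y t)^T *m P *m dcol y t = (Q *m y t)^T *m (E *m dcol y t).
  by rewrite trmx_mul !mulmxA.
rewrite hE -mulmxA mulmxBl mulmxBr e00B !mulmxA.
have h1 := skew_qf (Q *m y t) hJ; have h2 := hRpsd (Q *m y t).
rewrite !mulmxA in h1 h2; lra.
Qed.

Lemma energy_mono (R : realType) (n : nat) (E J Rm Q : 'M[R]_n)
  (hJ : J^T = - J) (hR : Rm^T = Rm) (hRpsd : psd Rm)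
  (hQE : Q^T *m E = E^T *m Q) (y : R -> 'cV[R]_n) :
  (forall j t, derivable (fun s => y s j 0) t 1) ->
  (forall t, E *m dcol y t = (J - Rm) *m Q *m y t) ->
  forall t, 0 <= t ->
  ((y t)^T *m (Q^T *m E) *m y t) 0 0 <= ((y 0)^T *m (Q^T *m E) *m y 0) 0 0.
Proof.
move=> hd hE t t0.
set f := fun s => ((y s)^T *m (Q^T *m E) *m y s) 0 0.
have hf : forall s, derivable f s 1 /\ (f^`()%classic) s <= 0.
  move=> s; have [D hD D0] := energy_deriv hJ hR hRpsd hQE (hd ^~ s) (hE s).
  split; first exact: ex_derive.
  by rewrite derive1E derive_val.
apply: (@ler0_derive1_le_cc R f 0 t).
- by move=> s _; case: (hf s).
- by move=> s _; case: (hf s).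
- by apply: derivable_within_continuous => s _; case: (hf s).
- by rewrite in_itv /= lexx t0.
- by rewrite in_itv /= lexx t0.
- exact: t0.
Qed.

Lemma sq_bound (R : realType) (a b : R) : a ^+ 2 <= b -> `|a| <= 1 + b.
Proof.
move=> h; have [a0|a0] := leP 0 a.
  rewrite ger0_norm //; nra.
rewrite ltr0_norm //; nra.
Qed.

Lemma entry_bound (R : realType) n (N1 N2 : 'M[R]_n) (u1 u2 : 'cV[R]_n) (c1 c2 : 'I_n -> R) i :
  (forall j, `|u1 j 0| <= c1 j) -> (forall j, `|u2 j 0| <= c2 j) ->
  `|(N1 *m u1 + N2 *m u2) i 0| <=
     \sum_j `|N1 i j| * c1 j + \sum_j `|N2 i j| * c2 j.
Proof.
move=> h1 h2; rewrite !mxE; apply: (le_trans (ler_normD _ _)); apply: lerD.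
  apply: (le_trans (ler_norm_sum _ _ _)); apply: ler_sum => j _.
  by rewrite normrM ler_wpM2l.
apply: (le_trans (ler_norm_sum _ _ _)); apply: ler_sum => j _.
by rewrite normrM ler_wpM2l.
Qed.

Lemma le_sum_one (R : realType) n (B : 'I_n -> R) i :
  (forall k, 0 <= B k) -> B i <= \sum_k B k.
Proof.
move=> h; rewrite (bigD1 i) //= lerDl; apply: sumr_ge0 => k _; exact: h.
Qed.

Lemma Q_unit (R : realType) (n : nat) (E J Rm Q : 'M[R]_n) :
  (forall v : 'cV[R]_n, E *m v = 0 -> (Q^T *m J *m Q) *m v = 0 ->
        (Q^T *m Rm *m Q) *m v = 0 -> v = 0) ->
  (forall v : 'cV[R]_n, Q *m v = 0 -> E *m v = 0) -> Q \in unitmx.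
Proof.
move=> C hK; rewrite unitmxE unitfE; apply/eqP => /det0_col [v vn hv].
move/eqP: vn; apply; apply: C; first exact: hK.
  by rewrite -mulmxA hv mulmx0.
by rewrite -mulmxA hv mulmx0.
Qed.

Lemma G_unit (R : realType) (n : nat) (E J Rm Q : 'M[R]_n)
  (hJ : J^T = - J) (hR : Rm^T = Rm) (hRpsd : psd Rm) :
  (forall v : 'cV[R]_n, E *m v = 0 -> (Q^T *m J *m Q) *m v = 0 ->
        (Q^T *m Rm *m Q) *m v = 0 -> v = 0) ->
  E^T *m E + ((J - Rm) *m Q)^T *m ((J - Rm) *m Q) \in unitmx.
Proof.
move=> C; set A := (J - Rm) *m Q.
rewrite unitmxE unitfE; apply/eqP => /det0_col [w wn hw].
have eS : w^T *m (E^T *m E + A^T *m A) *m w = (E *m w)^T *m (E *m w) + (A *m w)^T *m (A *m w).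
  by rewrite !mulmxDr !mulmxDl !trmx_mul !mulmxA.
have : (w^T *m (E^T *m E + A^T *m A) *m w) 0 0 = 0 by rewrite -mulmxA hw mulmx0 mxE.
rewrite eS e00D => h0.
have g1 := gram_ge0 (E *m w); have g2 := gram_ge0 (A *m w).
have e1 : E *m w = 0 by apply: gram_eq0; lra.
have e2 : A *m w = 0 by apply: gram_eq0; lra.
set u := Q *m w.
have hAw : A *m w = J *m u - Rm *m u by rewrite /A -mulmxA mulmxBl.
have key : (u^T *m Rm *m u) 0 0 = 0.
  have : (u^T *m (A *m w)) 0 0 = 0 by rewrite e2 mulmx0 mxE.
  rewrite hAw mulmxBr e00B !mulmxA.
  have := skew_qf u hJ; rewrite !mulmxA => ->; lra.
have hRu := psd_zero hR hRpsd key.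
have hJu : J *m u = 0 by move: e2; rewrite hAw hRu subr0.
move/eqP: wn; apply; apply: C => //.
  by rewrite -!mulmxA -/u hJu mulmx0.
by rewrite -!mulmxA -/u hRu mulmx0.
Qed.

Lemma dcol_lin (R : realType) n (K : 'M[R]_n) (y : R -> 'cV[R]_n) (t : R) i :
  (forall j, derivable (fun s => y s j 0) t 1) ->
  derive1 (fun s => (K *m y s) i 0) t = (K *m dcol y t) i 0.
Proof. by move=> hd; rewrite derive1E; apply: derive_val; apply: is_derive_lin. Qed.

Lemma part2 (R : realType) (n : nat) (E J Rm Q : 'M[R]_n)
  (hJ : J^T = - J) (hR : Rm^T = Rm) (hRpsd : psd Rm)
  (hQE : Q^T *m E = E^T *m Q) (hQEpsd : psd (Q^T *m E)) :
  (forall v : 'cV[R]_n, E *m v = 0 -> (Q^T *m J *m Q) *m v = 0 ->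
        (Q^T *m Rm *m Q) *m v = 0 -> v = 0) ->
  (forall v : 'cV[R]_n, Q *m v = 0 -> E *m v = 0) ->
  stable_pencil E ((J - Rm) *m Q).
Proof.
move=> C hK x hsm hsol.
set A := (J - Rm) *m Q.
have Qu := Q_unit C hK.
have Gu := G_unit hJ hR hRpsd C; rewrite -/A in Gu.
set G := E^T *m E + A^T *m A in Gu.
set P := Q^T *m E.
have hsP : P^T = P by rewrite /P trmx_mul trmxK hQE.
have hd0 : forall j t, derivable (fun s => x s j 0) t 1.
  by move=> j t; have := hsm j 0 t; rewrite derive1n0.
have hd1 : forall j t, derivable (fun s => dcol x s j 0) t 1.
  move=> j t; have := hsm j 1 t; rewrite derive1n1.
  have -> : (fun s => dcol x s j 0) = (fun s => x s j 0)^`()%classic.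
    by apply/funext => s; rewrite /dcol mxE.
  by [].
have hE0 : forall t, E *m dcol x t = A *m x t.
  move=> t; apply/matrixP => i k; rewrite (ord1 k).
  by rewrite -dcol_lin //; case: (hsol i t).
have hE1 : forall t, E *m dcol (dcol x) t = A *m dcol x t.
  move=> t; apply/matrixP => i k; rewrite (ord1 k).
  rewrite -dcol_lin // -dcol_lin //; congr (derive1 _ t).
  by apply/funext => s; rewrite hE0.
have mono0 := energy_mono hJ hR hRpsd hQE hd0 hE0.
have mono1 := energy_mono hJ hR hRpsd hQE hd1 hE1.
rewrite -/P in mono0 mono1.
set H0 := ((x 0)^T *m P *m x 0) 0 0 in mono0.
set H1 := ((dcol x 0)^T *m P *m dcol x 0) 0 0 in mono1.
have QTu : Q^T \in unitmx by rewrite unitmx_tr.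
set Qi := invmx Q^T.
have hEP : forall z : 'cV[R]_n, E *m z = Qi *m (P *m z).
  by move=> z; rewrite /Qi /P !mulmxA mulVmx // mul1mx.
set N1 := invmx G *m E^T *m Qi; set N2 := invmx G *m A^T *m Qi.
set B := fun i => \sum_j `|N1 i j| * (1 + P j j * H0) + \sum_j `|N2 i j| * (1 + P j j * H1).
have B0 : forall i, 0 <= B i.
  move=> i; apply: addr_ge0; apply: sumr_ge0 => j _; apply: mulr_ge0 => //;
  apply: addr_ge0 => //; apply: mulr_ge0; try exact: psd_diag.
  - have := mono0 0 (lexx 0); rewrite -/H0; apply: le_trans; exact: hQEpsd.
  - have := mono1 0 (lexx 0); rewrite -/H1; apply: le_trans; exact: hQEpsd.
exists (\sum_i B i) => t t0 i.
apply: le_trans (le_sum_one i B0).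
have ez : x t = N1 *m (P *m x t) + N2 *m (P *m dcol x t).
  rewrite /N1 /N2 -!mulmxA -mulmxDr.
  have hEP' : forall z : 'cV[R]_n, Qi *m (Q^T *m (E *m z)) = E *m z.
    by move=> z; rewrite mulmxA -/P -hEP.
  rewrite !hEP' hE0 (mulmxA E^T E) (mulmxA A^T A) -mulmxDl -/G mulKmx //.
rewrite ez; apply: entry_bound => j.
  apply: sq_bound; apply: le_trans (psd_entry _ j hsP hQEpsd) _.
  by apply: ler_wpM2l; [exact: psd_diag | exact: mono0].
apply: sq_bound; apply: le_trans (psd_entry _ j hsP hQEpsd) _.
by apply: ler_wpM2l; [exact: psd_diag | exact: mono1].
Qed.

Theorem corollary9 (R : realType) (n : nat) (E J Rm Q : 'M[R]_n)
  (hJ : J^T = - J) (hR : Rm^T = Rm) (hRpsd : psd Rm)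
  (hQE : Q^T *m E = E^T *m Q) (hQEpsd : psd (Q^T *m E)) :
  (regular_pencil E ((J - Rm) *m Q) <->
     (forall v : 'cV[R]_n, E *m v = 0 -> (Q^T *m J *m Q) *m v = 0 ->
        (Q^T *m Rm *m Q) *m v = 0 -> v = 0)) /\
  ((forall v : 'cV[R]_n, E *m v = 0 -> (Q^T *m J *m Q) *m v = 0 ->
        (Q^T *m Rm *m Q) *m v = 0 -> v = 0) ->
   (forall v : 'cV[R]_n, Q *m v = 0 -> E *m v = 0) ->
   stable_pencil E ((J - Rm) *m Q)).
Proof.
split; last exact: part2.
split; last exact: part1_bwd.
move=> hreg v hE hJ0 hR0; apply/eqP/negPn/negP => vn.
by move/eqP: hreg; apply; apply: (part1_fwd hJ hR hQE vn).
Qed.
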